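(* Let $\mathfrak{g}$ be a solvable Lie algebra of dimension $n$ (over $\mathbb{C}$, or real and complexified), with $k=\dim H^1(\mathfrak{g})$, weights $\alpha_{k+1},\dots,\alpha_n$ of the completely reducible representation associated to $\mathrm{ad}|_{[\mathfrak{g},\mathfrak{g}]}$, and let $\Omega_{\mathfrak{g}}$ be the finite set of all sums $\alpha_{i_1}+\dots+\alpha_{i_p}$, $k+1\le i_1<\dots<i_p\le n$, $p\ge 1$. Then there is a subset $\tilde\Omega_{\mathfrak{g}}\subseteq\Omega_{\mathfrak{g}}$, depending only on $\mathfrak{g}$, such that for every closed $1$-form $\omega\in\mathfrak{g}^*$ and scalar $\lambda$, the cohomology $H^*_{\lambda\omega}(\mathfrak{g})$ is non-trivial if and only if $-\lambda\omega\in\{0\}\cup\tilde\Omega_{\mathfrak{g}}$. In particular the set of such $-\lambda\omega$ is a finite subset of $H^1(\mathfrak{g})$.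
   Context: The differential $d$ on $\Lambda^*(\mathfrak{g}^* )$ is $df(X_1,\dots,X_{q+1})=\sum_{1\le i<j\le q+1}(-1)^{i+j-1}f([X_i,X_j],X_1,\dots,\hat X_i,\dots,\hat X_j,\dots,X_{q+1})$; closed $1$-forms on $\mathfrak{g}$ are identified with $H^1(\mathfrak{g})$. For a closed $1$-form $\omega$ and scalar $\lambda$, $H^*_{\lambda\omega}(\mathfrak{g})$ is the cohomology of $\Lambda^*(\mathfrak{g}^* )$ with differential $d_{\lambda\omega}(a)=da+\lambda\omega\wedge a$ (the cohomology of $\mathfrak{g}$ with coefficients in the one-dimensional representation $\xi\mapsto\lambda\omega(\xi)$). The weights $\alpha_j\in\mathfrak{g}^*$ are the linear forms by which $\mathfrak{g}$ acts on the one-dimensional quotients of an $\mathrm{ad}$-invariant flag in $[\mathfrak{g},\mathfrak{g}]$ (Lie's theorem). *)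

(* Defs.v *)
From mathcomp Require Import all_boot all_algebra.
From mathcomp Require Import reals.
From mathcomp Require Import complex.
Set Implicit Arguments. Unset Strict Implicit. Unset Printing Implicit Defensive.
Import GRing.Theory.
Local Open Scope ring_scope.

(* Linear forms on V
   (elements of g^* ) are column vectors 'cV[F]_n, acting by [ev a x]. *)

Section LieDefs.
Variable (F : fieldType) (n : nat).
Local Notation V := 'rV[F]_n.
Local Notation form := 'cV[F]_n.

Definition ev (a : form) (x : V) : F := (x *m a) 0 0.

Definition is_lie_bracket (br : V -> V -> V) : Prop :=
  [/\ (forall (c : F) x y z, br (c *: x + y) z = c *: br x z + br y z),
      (forall (c : F) x y z, br x (c *: y + z) = c *: br x y + br x z),
      (forall x, br x x = 0) &
      (forall x y z, br x (br y z) + br y (br z x) + br z (br x y) = 0)].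

(* derived subspace [U,U] of a subspace U (row space of a square matrix) *)
Definition derived (br : V -> V -> V) (U : 'M[F]_n) : 'M[F]_n :=
  (\sum_(i < n) \sum_(j < n) <<br (row i U) (row j U)>>)%MS.

Definition commutator_sub (br : V -> V -> V) : 'M[F]_n := derived br 1%:M.

Definition solvable_lie (br : V -> V -> V) : Prop :=
  exists s : nat, \rank (iter s (derived br) 1%:M) = 0%N.

Definition closed_form (br : V -> V -> V) (a : form) : Prop :=
  forall x y, ev a (br x y) = 0.

(* q-cochains: functions on lists of vectors, relevant on lists of length q,
   multilinear and alternating there *)
Definition rem_at (i : nat) (X : seq V) : seq V := take i X ++ drop i.+1 X.

Definition is_qform (q : nat) (f : seq V -> F) : Prop :=
  (forall (X : seq V) (i : nat) (c : F) (u v : V), size X = q -> (i < q)%N ->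
     f (set_nth 0 X i (c *: u + v)) = c * f (set_nth 0 X i u) + f (set_nth 0 X i v))
  /\ (forall (X : seq V) (i j : nat), size X = q -> (i < j < q)%N ->
        nth 0 X i = nth 0 X j -> f X = 0).

(* twisted differential d_theta f = d f + theta /\ f, with the paper's sign
   conventions (0-based indices):
   (d f)(X_0..X_q) = sum_{i<j} (-1)^(i+j+1) f([X_i,X_j], X without i,j)
   (theta /\ f)(X_0..X_q) = sum_i (-1)^i theta(X_i) f(X without i) *)
Definition dtw (br : V -> V -> V) (theta : form) (f : seq V -> F) : seq V -> F :=
  fun X =>
    \sum_(j < size X) \sum_(i < j)
       (-1) ^+ (i + j + 1)%N * f (br (nth 0 X i) (nth 0 X j) :: rem_at i (rem_at j X))
    + \sum_(i < size X) (-1) ^+ i * ev theta (nth 0 X i) * f (rem_at i X).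

Definition cocycle (br : V -> V -> V) (theta : form) (q : nat) (f : seq V -> F) :=
  forall X : seq V, size X = q.+1 -> dtw br theta f X = 0.

Definition coboundary (br : V -> V -> V) (theta : form) (q : nat) (f : seq V -> F) :=
  if q is q'.+1 then
    exists g : seq V -> F, is_qform q' g /\
      forall X : seq V, size X = q -> f X = dtw br theta g X
  else forall X : seq V, size X = 0%N -> f X = 0.

Definition twisted_cohom_nontrivial (br : V -> V -> V) (theta : form) : Prop :=
  exists (q : nat) (f : seq V -> F),
    [/\ is_qform q f, cocycle br theta q f & ~ coboundary br theta q f].

(* an ad-invariant full flag of [g,g] given by a triangular basis v_0..v_{m-1}
   (V_i = span(v_0..v_{i-1})), with weights alpha_i: g acts on V_{i+1}/V_i
   by alpha_i *)
Definition flagmx m (v : 'I_m -> V) : 'M[F]_(m, n) := \matrix_(i < m) v i.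

Definition lie_flag (br : V -> V -> V) m (v : 'I_m -> V) (alpha : 'I_m -> form) :=
  [/\ row_free (flagmx v),
      (flagmx v == commutator_sub br)%MS &
      forall (i : 'I_m) (x : V),
        (br x (v i) - ev (alpha i) x *: v i <=
           \matrix_(j < m) (if (j < i)%N then v j else 0))%MS].

Definition in_Omega m (alpha : 'I_m -> form) (a : form) : Prop :=
  exists S : {set 'I_m}, S != set0 /\ a = \sum_(i in S) alpha i.

End LieDefs.

(* Main.v *)
Require Import Defs.
From mathcomp Require Import all_boot all_algebra.
From mathcomp Require Import reals.
From mathcomp Require Import complex.
From Stdlib Require Import Classical.
From mathcomp Require Import zify ring.
Set Implicit Arguments. Unset Strict Implicit. Unset Printing Implicit Defensive.
Import GRing.Theory.
Local Open Scope ring_scope.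

Section Seqs.
Variables (F : fieldType) (n : nat).
Local Notation T := 'rV[F]_n.
Implicit Types (X : seq T).

Lemma size_rem_at i X : (i < size X)%N -> size (rem_at i X) = (size X).-1.
Proof.
move=> hi; rewrite /rem_at size_cat size_take size_drop hi.
by case: (size X) hi => // s hs; rewrite subSS; lia.
Qed.

Lemma nth_rem_at i X l : nth 0 (rem_at i X) l = nth 0 X (bump i l).
Proof.
rewrite /rem_at nth_cat size_take /bump.
have [hiX|hiX] := ltnP i (size X); have [hli|hli] := ltnP l i => /=.
- by rewrite nth_take.
- by rewrite nth_drop; congr nth; lia.
- case: ltnP => h; first by rewrite nth_take.
  rewrite !nth_default // ?size_drop; lia.
- case: ltnP => h; first by lia.
  rewrite !nth_default // ?size_drop; lia.
Qed.

Lemma size_set_lt X k (y : T) : (k < size X)%N -> size (set_nth 0 X k y) = size X.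
Proof. by move=> h; rewrite size_set_nth; apply/maxn_idPr. Qed.



Lemma rem_set_bump j l X (y : T) : (j < size X)%N -> (l < (size X).-1)%N ->
  rem_at j (set_nth 0 X (bump j l) y) = set_nth 0 (rem_at j X) l y.
Proof.
move=> hj hl.
have hb : (bump j l < size X)%N by rewrite /bump; case: (j <= l)%N; lia.
apply: (@eq_from_nth _ 0).
  by rewrite size_rem_at ?size_set_lt // ?size_rem_at.
move=> p _; rewrite nth_rem_at !nth_set_nth /= nth_rem_at.
by rewrite (inj_eq (can_inj (bumpK j))).
Qed.

Lemma rem_set_same j X (y : T) : (j < size X)%N ->
  rem_at j (set_nth 0 X j y) = rem_at j X.
Proof.
move=> hj; apply: (@eq_from_nth _ 0).
  by rewrite !size_rem_at ?size_set_lt.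
move=> p _; rewrite !nth_rem_at nth_set_nth /=.
rewrite /bump; case: (leqP j p) => h /=; case: eqP => //; lia.
Qed.

Lemma rem_at0 (x : T) X : rem_at 0 (x :: X) = X.
Proof. by rewrite /rem_at /= drop0. Qed.

Lemma rem_atS j (x : T) X : rem_at j.+1 (x :: X) = x :: rem_at j X.
Proof. by []. Qed.

End Seqs.
Section Forms.
Variables (F : fieldType) (n : nat).
Local Notation V := 'rV[F]_n.
Variables (q : nat) (f : seq V -> F) (hf : is_qform q f).

Lemma set_nth_id (X : seq V) i : (i < size X)%N -> set_nth 0 X i (nth 0 X i) = X.
Proof.
move=> hi; apply: (@eq_from_nth _ 0); first by rewrite size_set_lt.
by move=> p _; rewrite nth_set_nth /=; case: eqP => // ->.
Qed.

Lemma f_lin (X : seq V) i c u v : size X = q -> (i < q)%N ->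
  f (set_nth 0 X i (c *: u + v)) = c * f (set_nth 0 X i u) + f (set_nth 0 X i v).
Proof. by case: hf => h _; apply: h. Qed.

Lemma f_add (X : seq V) i u v : size X = q -> (i < q)%N ->
  f (set_nth 0 X i (u + v)) = f (set_nth 0 X i u) + f (set_nth 0 X i v).
Proof. by move=> hs hi; rewrite -{1}(scale1r u) f_lin // mul1r. Qed.

Lemma f_zero (X : seq V) i : size X = q -> (i < q)%N -> f (set_nth 0 X i 0) = 0.
Proof.
move=> hs hi; have h := f_add 0 0 hs hi; rewrite addr0 in h.
by apply: (addrI (f (set_nth 0 X i 0))); rewrite addr0 -h.
Qed.

Lemma f_scale (X : seq V) i c u : size X = q -> (i < q)%N ->
  f (set_nth 0 X i (c *: u)) = c * f (set_nth 0 X i u).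
Proof.
move=> hs hi; have -> : c *: u = c *: u + 0 by rewrite addr0.
by rewrite f_lin // f_zero // addr0.
Qed.

Lemma f_nth0 (X : seq V) i : size X = q -> (i < q)%N -> nth 0 X i = 0 -> f X = 0.
Proof.
move=> hs hi h0; have e : (i < size X)%N by rewrite hs.
by rewrite -(set_nth_id e) h0 f_zero.
Qed.

Lemma f_alt (X : seq V) i j : size X = q -> (i < q)%N -> (j < q)%N -> i != j ->
  nth 0 X i = nth 0 X j -> f X = 0.
Proof.
case: hf => _ h hs hi hj; case: (ltngtP i j) => // hij _ e.
  by apply: (h X i j) => //; rewrite hij hj.
by apply: (h X j i) => //; rewrite hij hi.
Qed.

Lemma f_swap (X : seq V) i j : size X = q -> (i < q)%N -> (j < q)%N -> i != j ->
  f (set_nth 0 (set_nth 0 X i (nth 0 X j)) j (nth 0 X i)) = - f X.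
Proof.
move=> hs hi hj hij.
pose Z u v := set_nth 0 (set_nth 0 X i u) j v.
have sZ u v : size (Z u v) = q by rewrite /Z !size_set_lt ?hs // size_set_lt ?hs.
have ZC u v : Z u v = set_nth 0 (set_nth 0 X j v) i u.
  by rewrite /Z [LHS]set_set_nth ifN.
have sj v : size (set_nth 0 X j v) = q by rewrite size_set_lt ?hs.
have si u : size (set_nth 0 X i u) = q by rewrite size_set_lt ?hs.
have Zuu u : f (Z u u) = 0.
  apply: (f_alt (i:=i) (j:=j)) => //.
  by rewrite ZC !nth_set_nth /= eqxx; case: eqP => // _; rewrite nth_set_nth /= eqxx.
have addl u1 u2 v : f (Z (u1 + u2) v) = f (Z u1 v) + f (Z u2 v).
  by rewrite !ZC f_add.
have addr u v1 v2 : f (Z u (v1 + v2)) = f (Z u v1) + f (Z u v2).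
  by rewrite /Z f_add.
set a := nth 0 X i; set b := nth 0 X j.
have := Zuu (a + b); rewrite addl !addr !Zuu add0r addr0.
have -> : Z a b = X by rewrite /Z /a /b set_nth_id ?hs // set_nth_id ?hs.
move=> h; apply: (addrI (f X)); rewrite subrr h.
by rewrite /Z /a /b.
Qed.

Lemma f_reorder (Y : seq V) j y : size Y = q -> (j < q)%N ->
  f (y :: rem_at j Y) = (-1) ^+ j * f (set_nth 0 Y j y).
Proof.
elim: j Y => [|j IH] Y hs hj.
  by case: Y hs => [|z Y] hs //=; [rewrite -hs in hj | rewrite rem_at0 expr0 mul1r].
have hj' : (j < q)%N by apply: ltnW.
pose Y2 := set_nth 0 Y j.+1 (nth 0 Y j).
have s2 : size Y2 = q by rewrite size_set_lt ?hs.
have e : rem_at j Y2 = rem_at j.+1 Y.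
  apply: (@eq_from_nth _ 0).
    by rewrite !size_rem_at ?s2 ?hs.
  move=> p _; rewrite !nth_rem_at nth_set_nth /= /bump.
  case: (leqP j p) => h /=; case: (leqP j.+1 p) => h1 /=;
    case: eqP => [e0|ne]; try (congr nth; lia); exfalso; lia.
rewrite -e IH //.
have -> : set_nth 0 Y2 j y = set_nth 0 (set_nth 0 (set_nth 0 Y j.+1 y) j (nth 0 (set_nth 0 Y j.+1 y) j.+1)) j.+1 (nth 0 (set_nth 0 Y j.+1 y) j).
  apply: (@eq_from_nth _ 0).
    by rewrite !size_set_lt ?hs.
  move=> p _; rewrite !nth_set_nth /=.
  have E : (j == j.+1) = false by lia.
  rewrite /Y2 !nth_set_nth /= eqxx E.
  case: (eqVneq p j.+1) => [e1|n1]; case: (eqVneq p j) => [e2|n2] //; try (exfalso; lia).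
  by rewrite nth_set_nth /= (negbTE n1).
rewrite exprS mulN1r mulNr -mulrN; congr (_ * _).
by apply: f_swap; rewrite ?size_set_lt ?hs // neq_ltn ltnSn.
Qed.

End Forms.
Section Ops.
Variables (F : fieldType) (n : nat).
Local Notation V := 'rV[F]_n.

Definition upd (phi : V -> V) (X : seq V) k := set_nth 0 X k (phi (nth 0 X k)).
Definition Mop (phi : V -> V) (f : seq V -> F) : seq V -> F :=
  fun X => \sum_(k < size X) f (upd phi X k).
Definition iot (x : V) (f : seq V -> F) : seq V -> F := fun X => f (x :: X).
Definition Lop (th : F) (phi : V -> V) (f : seq V -> F) : seq V -> F :=
  fun X => th * f X + Mop phi f X.
Definition addf (f g : seq V -> F) : seq V -> F := fun X => f X + g X.
Definition sclf (c : F) (f : seq V -> F) : seq V -> F := fun X => c * f X.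

Lemma qform_add q f g : is_qform q f -> is_qform q g -> is_qform q (addf f g).
Proof.
move=> hf hg; split.
  move=> X i c u v hs hi; rewrite /addf !(f_lin hf) // !(f_lin hg) //.
  by rewrite mulrDr; ring.
move=> X i j hs hij e; rewrite /addf.
have hi : (i < q)%N by case/andP: hij => h1 h2; apply: ltn_trans h2.
have hj : (j < q)%N by case/andP: hij.
have nij : i != j by case/andP: hij => h1 _; rewrite neq_ltn h1.
by rewrite (f_alt hf hs hi hj nij e) (f_alt hg hs hi hj nij e) addr0.
Qed.

Lemma qform_scl q c f : is_qform q f -> is_qform q (sclf c f).
Proof.
move=> hf; split.
  by move=> X i a u v hs hi; rewrite /sclf (f_lin hf) //; ring.
move=> X i j hs hij e; rewrite /sclf.
have hi : (i < q)%N by case/andP: hij => h1 h2; apply: ltn_trans h2.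
have hj : (j < q)%N by case/andP: hij.
have nij : i != j by case/andP: hij => h1 _; rewrite neq_ltn h1.
by rewrite (f_alt hf hs hi hj nij e) mulr0.
Qed.

Lemma qform_iot q x f : is_qform q.+1 f -> is_qform q (iot x f).
Proof.
move=> hf; split.
  move=> X i c u v hs hi; rewrite /iot.
  have -> : forall w, x :: set_nth 0 X i w = set_nth 0 (x :: X) i.+1 w by [].
  by rewrite (f_lin hf) //= hs.
move=> X i j hs hij e; rewrite /iot.
case: hf => _ h; apply: (h _ i.+1 j.+1) => //=; by rewrite hs.
Qed.

Variable phi : V -> V.
Hypothesis lin_phi : forall (c : F) u v, phi (c *: u + v) = c *: phi u + phi v.

Lemma phi0 : phi 0 = 0.
Proof.
have := lin_phi 1 0 0; rewrite !scale1r addr0 => h.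
by apply: (addrI (phi 0)); rewrite addr0 -h.
Qed.

Lemma upd_set X i w k : (k < size X)%N -> (i < size X)%N ->
  upd phi (set_nth 0 X i w) k =
  if k == i then set_nth 0 X i (phi w) else set_nth 0 (upd phi X k) i w.
Proof.
move=> hk hi; rewrite /upd nth_set_nth /=.
case: eqP => [->|ne]; first by rewrite set_set_nth eqxx.
rewrite [LHS]set_set_nth; case: eqP => // e. by case: ne.
Qed.

Lemma qform_M q f : is_qform q f -> is_qform q (Mop phi f).
Proof.
move=> hf; split.
  move=> X i c u v hs hi; rewrite /Mop !size_set_lt ?hs //.
  rewrite mulr_sumr -big_split /=; apply: eq_bigr => k _.
  have hk : (k < size X)%N by rewrite hs.
  rewrite !upd_set ?hs //; case: eqP => _.
    by rewrite lin_phi (f_lin hf).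
  by rewrite (f_lin hf) // /upd size_set_lt.
move=> X a b hs hab e; rewrite /Mop.
have ha : (a < size X)%N by case/andP: hab => h1 h2; rewrite hs; apply: ltn_trans h2.
have hb : (b < size X)%N by case/andP: hab; rewrite hs.
have nab : a != b by case/andP: hab => h1 _; rewrite neq_ltn h1.
have sU k : (k < size X)%N -> size (upd phi X k) = q by move=> hk; rewrite /upd size_set_lt.
rewrite (bigD1 (Ordinal ha)) // (bigD1 (Ordinal hb)) /=; last by rewrite -val_eqE /= eq_sym.
rewrite big1 ?addr0.
  have -> : upd phi X b = set_nth 0 (set_nth 0 (upd phi X a) a (nth 0 (upd phi X a) b)) b
             (nth 0 (upd phi X a) a).
    have sa : size (upd phi X a) = size X by rewrite /upd size_set_lt.
    apply: (@eq_from_nth _ 0).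
      by rewrite /upd !size_set_lt // -/(upd phi X a) ?sa // size_set_lt ?sa.
    move=> p _; rewrite /upd !nth_set_nth /= eqxx (eq_sym b a) (negbTE nab).
    rewrite !nth_set_nth /= e; case: eqP => // ne; case: eqP => [->|] //.
    by move=> na; rewrite nth_set_nth /=; case: eqP.
  rewrite addrC; apply/eqP; rewrite addr_eq0; apply/eqP.
  by apply: (f_swap hf); rewrite ?sU // -hs.
move=> k /andP [] nb na.
apply: (f_alt hf (i:=a) (j:=b)) => //; rewrite -?hs //.
  by rewrite /upd size_set_lt.
rewrite /upd !nth_set_nth /=.
have -> : (a == k) = false.
  by apply/negbTE; apply: contra nb => /eqP e'; apply/eqP; apply: val_inj; rewrite /= e'.
have -> : (b == k) = false.
  by apply/negbTE; apply: contra na => /eqP e'; apply/eqP; apply: val_inj; rewrite /= e'.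
by [].
Qed.

Lemma qform_L q th f : is_qform q f -> is_qform q (Lop th phi f).
Proof.
move=> hf; have := qform_add (qform_scl th hf) (qform_M hf).
by [].
Qed.

End Ops.
Section Cartan.
Variables (F : fieldType) (n : nat).
Local Notation V := 'rV[F]_n.
Variables (br : V -> V -> V) (th : 'cV[F]_n).

Lemma sign2 k : (-1) ^+ k.+2 = (-1) ^+ k :> F.
Proof. by rewrite !exprS mulN1r mulN1r opprK. Qed.

Lemma cartan q (f : seq V -> F) (x : V) (X : seq V) : is_qform q f -> size X = q ->
  dtw br th (iot x f) X + dtw br th f (x :: X) = Lop (ev th x) (br x) f X.
Proof.
move=> hf hs.
have E2 : \sum_(j < size (x :: X)) \sum_(i < j)
     (-1) ^+ (i + j + 1)%N * f (br (nth 0 (x :: X) i) (nth 0 (x :: X) j)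
        :: rem_at i (rem_at j (x :: X)))
   = \sum_(j < size X) ((-1) ^+ j * f (br x (nth 0 X j) :: rem_at j X) +
      \sum_(i < j) (-1) ^+ (i + j + 1)%N * f (br (nth 0 X i) (nth 0 X j)
        :: x :: rem_at i (rem_at j X))).
  rewrite /= big_ord_recl big_ord0 add0r; apply: eq_bigr => j _.
  have b0 k : bump 0 k = k.+1 by [].
  rewrite big_ord_recl /= !b0 !add0n; congr (_ + _).
    by rewrite addn1 sign2 rem_atS rem_at0.
  apply: eq_bigr => i _; rewrite !b0.
  have -> : (i.+1 + j.+1 + 1 = (i + j + 1).+2)%N by lia.
  by rewrite sign2 rem_atS rem_atS.
have E1 : \sum_(i < size (x :: X)) (-1) ^+ i * ev th (nth 0 (x :: X) i) * f (rem_at i (x :: X))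
   = ev th x * f X - \sum_(i < size X) (-1) ^+ i * ev th (nth 0 X i) * f (x :: rem_at i X).
  rewrite /= big_ord_recl /= expr0 mul1r rem_at0; congr (_ + _).
  rewrite -sumrN; apply: eq_bigr => i _.
  by rewrite /bump /= add1n exprS rem_atS !mulN1r !mulNr.
rewrite /dtw E1 E2 /iot /Lop /Mop.
match goal with |- ?A + ?B + (?C + (?D - ?B)) = ?D + ?M =>
  suff key : A + C = M by rewrite -key; ring end.
rewrite -big_split /=; apply: eq_bigr => j _.
rewrite addrCA -big_split /= big1 ?addr0.
  rewrite (f_reorder hf) ?hs //; last by rewrite -hs.
  by rewrite signrMK.
move=> i _; rewrite -mulrDr.
have hj : (j < size X)%N by [].
have hi : (i < size X)%N by apply: ltn_trans (ltn_ord i) hj.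
have sR : size (rem_at i (rem_at j X)) = (size X).-2.
  have sj : size (rem_at j X) = (size X).-1 by apply: size_rem_at.
  have hi' : (i < size (rem_at j X))%N.
    by rewrite sj; have := ltn_ord i; lia.
  by rewrite size_rem_at // sj.
have -> : f (br (nth 0 X i) (nth 0 X j) :: x :: rem_at i (rem_at j X)) =
          - f (x :: br (nth 0 X i) (nth 0 X j) :: rem_at i (rem_at j X)).
  have := f_swap hf (X := [:: x, br (nth 0 X i) (nth 0 X j) & rem_at i (rem_at j X)]) (i:=0) (j:=1).
  apply => //=; rewrite ?sR -?hs; have := ltn_ord i; lia.
by rewrite addrC addNr mulr0.
Qed.

End Cartan.
Section Comm.
Variables (F : fieldType) (n : nat).
Local Notation V := 'rV[F]_n.

Lemma sum_two N (D : 'I_N -> F) (i j : 'I_N) : i != j ->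
  (forall k : 'I_N, k != i -> k != j -> D k = 0) -> \sum_k D k = D i + D j.
Proof.
move=> nij h; rewrite (bigD1 i) // (bigD1 j) /=; last by rewrite eq_sym.
by rewrite big1 ?addr0 // => k /andP [] a b; apply: h.
Qed.

Lemma sum_one N (D : 'I_N -> F) (i : 'I_N) :
  (forall k : 'I_N, k != i -> D k = 0) -> \sum_k D k = D i.
Proof.
by move=> h; rewrite (bigD1 i) //= big1 ?addr0 // => k; apply: h.
Qed.

Variable phi : V -> V.

Lemma size_upd X k : (k < size X)%N -> size (upd phi X k) = size X.
Proof. by move=> h; rewrite /upd size_set_lt. Qed.

Lemma nth_upd X k m : nth 0 (upd phi X k) m = if m == k then phi (nth 0 X k) else nth 0 X m.
Proof. by rewrite /upd nth_set_nth. Qed.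

Lemma rem_upd_same X j : (j < size X)%N -> rem_at j (upd phi X j) = rem_at j X.
Proof. by move=> h; rewrite /upd rem_set_same. Qed.

Lemma rem_upd_bump X j l : (j < size X)%N -> (l < (size X).-1)%N ->
  rem_at j (upd phi X (bump j l)) = upd phi (rem_at j X) l.
Proof.
by move=> hj hl; rewrite /upd rem_set_bump // nth_rem_at.
Qed.

Lemma sum_upd_rem (G : seq V -> F) X j : (j < size X)%N ->
  \sum_(k < size X) G (rem_at j (upd phi X k)) =
  G (rem_at j X) + \sum_(l < (size X).-1) G (upd phi (rem_at j X) l).
Proof.
move=> hj; rewrite (bigD1_ord (Ordinal hj)) //= rem_upd_same //; congr (_ + _).
apply: eq_bigr => l _; exact: (congr1 G (rem_upd_bump hj (ltn_ord l))).
Qed.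

Lemma rem2_upd_i X i j : (i < j)%N -> (j < size X)%N ->
  rem_at i (rem_at j (upd phi X i)) = rem_at i (rem_at j X).
Proof.
move=> hij hj.
have hb : bump j i = i by rewrite /bump leqNgt hij.
have hjX : (i < (size X).-1)%N by lia.
have e := rem_upd_bump hj hjX; rewrite hb in e.
by rewrite e rem_upd_same // size_rem_at.
Qed.

Lemma sum_upd_cons (G : seq V -> F) a R :
  \sum_(l < size (a :: R)) G (upd phi (a :: R) l) =
  G (phi a :: R) + \sum_(l < size R) G (a :: upd phi R l).
Proof. by rewrite big_ord_recl. Qed.

End Comm.
Section Comm2.
Variables (F : fieldType) (n : nat).
Local Notation V := 'rV[F]_n.
Variables (br : V -> V -> V) (th : 'cV[F]_n) (x : V).
Hypothesis hbr : is_lie_bracket br.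
Hypothesis hth : closed_form br th.

Lemma brL c u v w : br (c *: u + v) w = c *: br u w + br v w.
Proof. by case: hbr. Qed.
Lemma brR c u v w : br w (c *: u + v) = c *: br w u + br w v.
Proof. by case: hbr. Qed.
Lemma brDl u v w : br (u + v) w = br u w + br v w.
Proof. by rewrite -{1}(scale1r u) brL scale1r. Qed.
Lemma brDr u v w : br w (u + v) = br w u + br w v.
Proof. by rewrite -{1}(scale1r u) brR scale1r. Qed.
Lemma br0r w : br w 0 = 0.
Proof.
have := brDr 0 0 w; rewrite addr0 => h.
by apply: (addrI (br w 0)); rewrite addr0 -h.
Qed.
Lemma brNr u w : br w (- u) = - br w u.
Proof.
have := brR (-1) u 0 w; rewrite addr0 br0r addr0 scaleN1r => ->.
by rewrite scaleN1r.
Qed.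
Lemma br_anti u v : br u v = - br v u.
Proof.
case: hbr => _ _ hal _.
have := hal (u + v); rewrite brDl !brDr !hal add0r addr0 => /eqP.
by rewrite addr_eq0 => /eqP.
Qed.
Lemma jacobi' a b : br x (br a b) = br (br x a) b + br a (br x b).
Proof.
case: hbr => _ _ _ hj.
have := hj x a b.
rewrite (br_anti b x) brNr (br_anti b (br x a)) => /eqP.
rewrite -addrA addr_eq0 => /eqP ->.
by rewrite opprD !opprK addrC.
Qed.

Lemma ev_add (a : 'cV[F]_n) u v : ev a (u + v) = ev a u + ev a v.
Proof. by rewrite /ev mulmxDl mxE. Qed.

Local Notation phi := (br x).
Local Notation t := (ev th x).

Lemma phi_lin c u v : phi (c *: u + v) = c *: phi u + phi v.
Proof. exact: brR. Qed.

Lemma pair_sum p g (X : seq V) (i j : nat) : is_qform p g -> size X = p.+1 ->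
  (i < j)%N -> (j < size X)%N ->
  \sum_(k < size X) g (br (nth 0 (upd phi X k) i) (nth 0 (upd phi X k) j)
                        :: rem_at i (rem_at j (upd phi X k)))
  = \sum_(l < size (br (nth 0 X i) (nth 0 X j) :: rem_at i (rem_at j X)))
       g (upd phi (br (nth 0 X i) (nth 0 X j) :: rem_at i (rem_at j X)) l).
Proof.
move=> hg hs hij hj.
have hi : (i < size X)%N by apply: ltn_trans hj.
set a := br (nth 0 X i) (nth 0 X j).
set R := rem_at i (rem_at j X).
have sj : size (rem_at j X) = (size X).-1 by apply: size_rem_at.
have hi' : (i < size (rem_at j X))%N by rewrite sj; lia.
have sR : size R = (size X).-2 by rewrite /R size_rem_at // sj.
have p0 : (0 < p)%N by lia.
have saR : size (a :: R) = p by rewrite /= sR hs; lia.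
have gadd u v : g ((u + v) :: R) = g (u :: R) + g (v :: R).
  by have := f_add hg u v saR p0.
rewrite (sum_upd_cons phi g).
rewrite jacobi' gadd.
pose U (k : 'I_(size X)) := g (a :: rem_at i (rem_at j (upd phi X k))).
pose D (k : 'I_(size X)) := g (br (nth 0 (upd phi X k) i) (nth 0 (upd phi X k) j)
                        :: rem_at i (rem_at j (upd phi X k))) - U k.
rewrite (eq_bigr (fun k => U k + D k)); last by move=> k _; rewrite /D addrC subrK.
rewrite big_split /=.
have -> : \sum_(k < size X) U k = g (a :: R) + (g (a :: R) + \sum_(l < size R) g (a :: upd phi R l)).
  rewrite /U (sum_upd_rem phi (fun Y => g (a :: rem_at i Y))) //; congr (_ + _).
  rewrite -sj (sum_upd_rem phi (fun Y => g (a :: Y))) //.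
  by rewrite -/R sR sj.
rewrite (sum_two (i := Ordinal hi) (j := Ordinal hj)); first last.
- move=> k nki nkj; rewrite /D /U !nth_upd.
  have -> : (i == k) = false.
    by apply/negbTE; apply: contra nki => /eqP e'; apply/eqP; apply: val_inj; rewrite /= e'.
  have -> : (j == k) = false.
    by apply/negbTE; apply: contra nkj => /eqP e'; apply/eqP; apply: val_inj; rewrite /= e'.
  by rewrite subrr.
- by rewrite -val_eqE /= neq_ltn hij.
rewrite /D /U /= !nth_upd eqxx.
have -> : (j == i) = false by lia.
have -> : (i == j) = false by lia.
rewrite rem2_upd_i // rem_upd_same // -/R eqxx.
ring.
Qed.

Lemma single_sum (g : seq V -> F) (X : seq V) (i : nat) : (i < size X)%N ->
  \sum_(k < size X) ev th (nth 0 (upd phi X k) i) * g (rem_at i (upd phi X k))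
  = ev th (nth 0 X i) * \sum_(l < (size X).-1) g (upd phi (rem_at i X) l).
Proof.
move=> hi.
pose U (k : 'I_(size X)) := ev th (nth 0 X i) * g (rem_at i (upd phi X k)).
pose D (k : 'I_(size X)) := ev th (nth 0 (upd phi X k) i) * g (rem_at i (upd phi X k)) - U k.
rewrite (eq_bigr (fun k => U k + D k)); last by move=> k _; rewrite /D addrC subrK.
rewrite big_split /= /U -mulr_sumr (sum_upd_rem phi (fun Y => g Y)) //.
rewrite (sum_one (i := Ordinal hi)); last first.
  move=> k nk; rewrite /D /U nth_upd.
  have -> : (i == k) = false.
    by apply/negbTE; apply: contra nk => /eqP e'; apply/eqP; apply: val_inj; rewrite /= e'.
  by rewrite subrr.
rewrite /D /U /= nth_upd eqxx hth rem_upd_same //.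
ring.
Qed.

End Comm2.
Section Comm3.
Variables (F : fieldType) (n : nat).
Local Notation V := 'rV[F]_n.
Variables (br : V -> V -> V) (th : 'cV[F]_n) (x : V).
Hypothesis hbr : is_lie_bracket br.
Hypothesis hth : closed_form br th.
Local Notation phi := (br x).
Local Notation t := (ev th x).

Lemma comm p g (X : seq V) : is_qform p g -> size X = p.+1 ->
  dtw br th (Lop t phi g) X = Lop t phi (dtw br th g) X.
Proof.
move=> hg hs.
rewrite {2}/Lop /Mop.
have H2 : \sum_(k < size X) \sum_(j < size (upd phi X k)) \sum_(i < j)
     (-1) ^+ (i + j + 1)%N * g (br (nth 0 (upd phi X k) i) (nth 0 (upd phi X k) j)
        :: rem_at i (rem_at j (upd phi X k)))
   = \sum_(j < size X) \sum_(i < j) (-1) ^+ (i + j + 1)%N *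
      \sum_(l < size (br (nth 0 X i) (nth 0 X j) :: rem_at i (rem_at j X)))
       g (upd phi (br (nth 0 X i) (nth 0 X j) :: rem_at i (rem_at j X)) l).
  transitivity (\sum_(k < size X) \sum_(j < size X) \sum_(i < j)
     (-1) ^+ (i + j + 1)%N * g (br (nth 0 (upd phi X k) i) (nth 0 (upd phi X k) j)
        :: rem_at i (rem_at j (upd phi X k)))).
    by apply: eq_bigr => k _; rewrite size_upd.
  rewrite exchange_big; apply: eq_bigr => j _; rewrite exchange_big.
  apply: eq_bigr => i _; rewrite -mulr_sumr; congr (_ * _).
  rewrite -(pair_sum x hbr hg hs (ltn_ord i) (ltn_ord j)).
  by apply: eq_bigr.
have H1 : \sum_(k < size X) \sum_(i < size (upd phi X k))
     (-1) ^+ i * ev th (nth 0 (upd phi X k) i) * g (rem_at i (upd phi X k))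
   = \sum_(i < size X) (-1) ^+ i * ev th (nth 0 X i) *
       \sum_(l < size (rem_at i X)) g (upd phi (rem_at i X) l).
  transitivity (\sum_(k < size X) \sum_(i < size X)
     (-1) ^+ i * ev th (nth 0 (upd phi X k) i) * g (rem_at i (upd phi X k))).
    by apply: eq_bigr => k _; rewrite size_upd.
  rewrite exchange_big; apply: eq_bigr => i _.
  under eq_bigr => k _ do rewrite -mulrA.
  rewrite -mulr_sumr single_sum // size_rem_at //.
  by rewrite mulrA.
rewrite /dtw big_split /= H2 H1.
rewrite mulrDr addrACA; congr (_ + _).
  rewrite mulr_sumr -big_split; apply: eq_bigr => j _ /=.
  rewrite mulr_sumr -big_split; apply: eq_bigr => i _ /=.
  rewrite /Lop /Mop; ring.
rewrite mulr_sumr -big_split; apply: eq_bigr => i _ /=.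
rewrite /Lop /Mop; ring.
Qed.

End Comm3.
Section Cohom.
Variables (F : fieldType) (n : nat).
Local Notation V := 'rV[F]_n.

Definition opM (phi : V -> V) (s : seq F) (f : seq V -> F) : seq V -> F :=
  foldr (fun r h => addf (Mop phi h) (sclf (- r) h)) f s.

Lemma qform_opM phi (lin_phi : forall (c : F) u v, phi (c *: u + v) = c *: phi u + phi v)
  q s f : is_qform q f -> is_qform q (opM phi s f).
Proof.
move=> hf; elim: s => [|r s IH] //=.
by apply: qform_add; [apply: qform_M | apply: qform_scl].
Qed.

Variables (br : V -> V -> V) (th : 'cV[F]_n).

Lemma dtw_add g1 g2 X : dtw br th (addf g1 g2) X = dtw br th g1 X + dtw br th g2 X.
Proof.
rewrite /dtw /addf [RHS]addrACA; congr (_ + _); rewrite -big_split; apply: eq_bigr => j _ /=.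
  by rewrite -big_split; apply: eq_bigr => i _ /=; ring.
ring.
Qed.

Lemma dtw_scl c g X : dtw br th (sclf c g) X = c * dtw br th g X.
Proof.
rewrite /dtw /sclf mulrDr; congr (_ + _); rewrite mulr_sumr; apply: eq_bigr => j _ /=.
  by rewrite mulr_sumr; apply: eq_bigr => i _ /=; ring.
ring.
Qed.

Lemma dtw_zero X : dtw br th (fun _ => 0) X = 0.
Proof.
rewrite /dtw !big1 ?addr0 // => j _; first by rewrite mulr0.
by rewrite big1 // => i _; rewrite mulr0.
Qed.

Lemma qform_zero q : is_qform q (fun _ : seq V => (0 : F)).
Proof. by split=> *; rewrite ?mulr0 ?addr0. Qed.

Variable x : V.
Hypothesis hbr : is_lie_bracket br.
Hypothesis hth : closed_form br th.
Local Notation phi := (br x).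
Local Notation t := (ev th x).

Lemma opM_cob q (f : seq V -> F) s : is_qform q.+1 f -> cocycle br th q.+1 f ->
  exists g, is_qform q g /\ forall X, size X = q.+1 ->
    opM phi s f X = (\prod_(r <- s) (- (t + r))) * f X + dtw br th g X.
Proof.
move=> hf hcf; elim: s => [|r s [g [hg IH]]].
  exists (fun _ => 0); split; first exact: qform_zero.
  by move=> X _; rewrite /= big_nil mul1r dtw_zero addr0.
pose c := \prod_(r <- s) (- (t + r)).
exists (addf (addf (sclf c (iot x f)) (Lop t phi g)) (sclf (- (t + r)) g)); split.
  apply: qform_add; last exact: qform_scl.
  apply: qform_add; first by apply: qform_scl; apply: qform_iot.
  by apply: qform_L => //; apply: phi_lin.
move=> X hs.
have sU k : (k < size X)%N -> size (upd phi X k) = q.+1 by move=> hk; rewrite size_upd.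
have HM : Mop phi (opM phi s f) X = c * Mop phi f X + Mop phi (dtw br th g) X.
  rewrite /Mop mulr_sumr -big_split; apply: eq_bigr => k _ /=.
  by rewrite IH // sU.
have HC := cartan br th x hf hs.
have HK : dtw br th f (x :: X) = 0 by apply: hcf; rewrite /= hs.
have HD := comm x hbr hth hg hs.
have HD' : Mop phi (dtw br th g) X = dtw br th (Lop t phi g) X - t * dtw br th g X.
  by rewrite HD /Lop; ring.
have HC' : Mop phi f X = dtw br th (iot x f) X - t * f X.
  by rewrite /Lop HK addr0 in HC; rewrite HC; ring.
rewrite /= /addf /sclf HM IH // big_cons dtw_add dtw_add !dtw_scl HD' HC'.
rewrite -/c; ring.
Qed.

Lemma cob_of_opM q (f : seq V -> F) s : is_qform q.+1 f -> cocycle br th q.+1 f ->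
  \prod_(r <- s) (- (t + r)) != 0 ->
  (forall X, size X = q.+1 -> opM phi s f X = 0) ->
  coboundary br th q.+1 f.
Proof.
move=> hf hcf hc hz.
have [g [hg E]] := opM_cob s hf hcf.
exists (sclf (- (\prod_(r <- s) (- (t + r)))^-1) g); split; first exact: qform_scl.
move=> X hs; rewrite dtw_scl.
have := E X hs; rewrite hz // => /esym/eqP; rewrite addr_eq0 => /eqP e.
apply: (mulfI hc); rewrite e mulrA mulrN mulfV //; ring.
Qed.

End Cohom.
Section Spectral.
Variables (F : fieldType) (n : nat).
Local Notation V := 'rV[F]_n.
Variable phi : V -> V.
Hypothesis lin_phi : forall (c : F) u v, phi (c *: u + v) = c *: phi u + phi v.
Variables (b : nat -> V) (lam : nat -> F).

Fixpoint inF (k : nat) (y : V) : Prop :=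
  if k is k'.+1 then exists c w, inF k' w /\ y = w + c *: b k' else y = 0.

Lemma inF0 k : inF k 0.
Proof. by elim: k => [|k IH] //=; exists 0, 0; rewrite scale0r addr0. Qed.

Lemma inF_lin k c u w : inF k u -> inF k w -> inF k (c *: u + w).
Proof.
elim: k u w => [|k IH] u w /=; first by move=> -> ->; rewrite scaler0 addr0.
move=> [c1 [w1 [h1 ->]]] [c2 [w2 [h2 ->]]].
exists (c * c1 + c2), (c *: w1 + w2); split; first exact: IH.
by rewrite scalerDr scalerA scalerDl addrACA.
Qed.

Lemma inF_add k u w : inF k u -> inF k w -> inF k (u + w).
Proof. by move=> hu hw; rewrite -(scale1r u); apply: inF_lin. Qed.

Lemma inF_scale k c u : inF k u -> inF k (c *: u).
Proof. by move=> hu; rewrite -(addr0 (c *: u)); apply: inF_lin => //; apply: inF0. Qed.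

Lemma inF_S k y : inF k y -> inF k.+1 y.
Proof. by move=> h; exists 0, y; rewrite scale0r addr0. Qed.

Lemma inF_le k k' y : (k <= k')%N -> inF k y -> inF k' y.
Proof.
move=> /subnK <-; elim: (k' - k)%N => [|d IH] // h.
by rewrite addSn; apply: inF_S; apply: IH.
Qed.

Lemma inF_b k : inF k.+1 (b k).
Proof. by exists 1, 0; rewrite add0r scale1r; split => //; apply: inF0. Qed.

Hypothesis hb : forall k, inF k (phi (b k) - lam k *: b k).

Lemma phi0' : phi 0 = 0.
Proof.
have := lin_phi 1 0 0; rewrite !scale1r addr0 => h.
by apply: (addrI (phi 0)); rewrite addr0 -h.
Qed.

Lemma phi_inF k y : inF k y -> inF k (phi y).
Proof.
elim: k y => [|k IH] y /=; first by move=> ->; apply: phi0'.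
move=> [c [w [hw ->]]].
rewrite addrC lin_phi.
have -> : phi (b k) = lam k *: b k + (phi (b k) - lam k *: b k) by rewrite addrC subrK.
rewrite scalerDr scalerA.
have hr : inF k.+1 (c *: (phi (b k) - lam k *: b k) + phi w).
  by apply: inF_lin; apply: inF_S => //; apply: IH.
case: hr => c' [w' [hw' e]].
exists (c * lam k + c'), w'; split => //.
by rewrite -addrA e scalerDl addrCA.
Qed.

Definition allF k (X : seq V) := forall m, (m < size X)%N -> inF k (nth 0 X m).

Lemma allF_upd k X l : allF k X -> allF k (upd phi X l).
Proof.
move=> h m hm; rewrite nth_upd.
have [e|ne] := eqVneq m l.
  have [hl|hl] := ltnP l (size X); first by apply: phi_inF; apply: h.
  by rewrite nth_default // phi0'; apply: inF0.
have [hl|hl] := ltnP m (size X); first by apply: h.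
by rewrite nth_default //; apply: inF0.
Qed.

Lemma vanish_opM k q s h : (forall Y, size Y = q -> allF k Y -> h Y = 0) ->
  forall Y, size Y = q -> allF k Y -> opM phi s h Y = 0.
Proof.
move=> h0; elim: s => [|r s IH] Y hs hY //=; first exact: h0.
rewrite /addf /sclf /Mop IH // mulr0 addr0 big1 // => l _.
apply: IH; [by rewrite size_upd // hs | exact: allF_upd].
Qed.

Lemma iot_opM k q' s h : is_qform q'.+1 h ->
  (forall Y, size Y = q'.+1 -> allF k Y -> h Y = 0) ->
  forall Y, size Y = q' -> allF k Y ->
  iot (b k) (opM phi [seq r + lam k | r <- s] h) Y = opM phi s (iot (b k) h) Y.
Proof.
move=> hh h0; elim: s => [|r s IH] Y hs hY //=.
set H := opM phi [seq r0 + lam k | r0 <- s] h.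
set G := opM phi s (iot (b k) h).
have HG : H (b k :: Y) = G Y := IH Y hs hY.
have hH : is_qform q'.+1 H by apply: qform_opM.
have M1 : Mop phi H (b k :: Y) = lam k * H (b k :: Y) + \sum_(l < size Y) H (b k :: upd phi Y l).
  rewrite /Mop (sum_upd_cons phi H); congr (_ + _).
  set r0 := phi (b k) - lam k *: b k.
  have -> : phi (b k) = lam k *: b k + r0 by rewrite /r0 addrC subrK.
  have sY : size (b k :: Y) = q'.+1 by rewrite /= hs.
  have := f_lin hH (lam k) (b k) r0 sY (ltn0Sn q'); rewrite /= => ->.
  have -> : H (r0 :: Y) = 0.
    apply: (vanish_opM _ h0); first by rewrite /= hs.
    by move=> [|m] hm /=; [apply: hb | apply: hY].
  by rewrite addr0.
have M2 : Mop phi G Y = \sum_(l < size Y) H (b k :: upd phi Y l).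
  apply: eq_bigr => l _; symmetry; apply: IH; first by rewrite size_upd // hs.
  exact: allF_upd.
rewrite /iot /addf /sclf -/H -/G M1 M2 HG; ring.
Qed.


Lemma inF_S_dec k y : inF k.+1 y -> exists c w, inF k w /\ y = c *: b k + w.
Proof. by move=> [c [w [hw ->]]]; exists c, w; rewrite addrC. Qed.

Lemma expand k q h : is_qform q h ->
  (forall Y, size Y = q -> allF k Y -> h Y = 0) ->
  (forall Y, size Y = q.-1 -> allF k Y -> h (b k :: Y) = 0) ->
  forall X, size X = q -> allF k.+1 X -> h X = 0.
Proof.
move=> hh h0 h1.
have Q : forall j, (j < q)%N -> forall p, (p <= j)%N -> forall Z, size Z = q ->
    nth 0 Z j = b k ->
    (forall m, (m < p)%N -> inF k.+1 (nth 0 Z m)) ->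
    (forall m, (p <= m < q)%N -> m != j -> inF k (nth 0 Z m)) -> h Z = 0.
  move=> j hj; elim => [|p IHp] hp Z hZ hZj hlo hhi.
    have hjZ : (j < size Z)%N by rewrite hZ.
    have e := f_reorder hh (b k) hZ hj.
    rewrite -hZj set_nth_id // hZj in e.
    have : h (b k :: rem_at j Z) = 0.
      apply: h1; first by rewrite size_rem_at // hZ.
      move=> m hm; rewrite nth_rem_at; apply: hhi.
        rewrite size_rem_at // hZ in hm; rewrite /bump; case: (j <= m)%N; lia.
      by rewrite /bump; case: (leqP j m) => hjm; rewrite ?add1n ?add0n; apply/eqP; lia.
    rewrite e => /eqP; rewrite mulf_eq0 signr_eq0 /= => /eqP //.
  have hpj : (p < j)%N by [].
  have hpZ : (p < size Z)%N by rewrite hZ; lia.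
  have [c [w [hw ew]]] := inF_S_dec (hlo p (ltnSn p)).
  rewrite -(set_nth_id hpZ) ew (f_lin hh) //; last lia.
  have -> : h (set_nth 0 Z p (b k)) = 0.
    apply: (f_alt hh (i:=p) (j:=j)); rewrite ?size_set_lt //; try lia.
    by rewrite !nth_set_nth /= eqxx; case: eqP => // ?; lia.
  rewrite mulr0 add0r; apply: IHp; rewrite ?size_set_lt //; try lia.
  - by rewrite nth_set_nth /=; case: eqP => // ?; lia.
  - move=> m hm; rewrite nth_set_nth /=; case: eqP => [e|ne]; [exfalso; lia | apply: hlo; lia].
  - move=> m hm nmj; rewrite nth_set_nth /=; case: eqP => [_|ne]; first exact: hw.
    by apply: hhi => //; lia.
have P : forall j X, size X = q -> allF k.+1 X ->
    (forall m, (j <= m < q)%N -> inF k (nth 0 X m)) -> h X = 0.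
  elim => [|j IHj] X hX hall hhi.
    by apply: h0 => // m hm; apply: hhi; rewrite -hX hm.
  have [hjq|hjq] := ltnP j q; last first.
    by apply: IHj => // m /andP [] a1 a2; lia.
  have hjX : (j < size X)%N by rewrite hX.
  have [c [w [hw ew]]] := inF_S_dec (hall j hjX).
  rewrite -(set_nth_id hjX) ew (f_lin hh) //.
  have hQ : h (set_nth 0 X j (b k)) = 0.
    apply: (Q j hjq j (leqnn j)).
    - by rewrite size_set_lt.
    - by rewrite nth_set_nth /= eqxx.
    - move=> m hm; rewrite nth_set_nth /=; case: eqP => [e|ne]; [exfalso; lia | apply: hall; lia].
    - move=> m hm nmj; rewrite nth_set_nth /= (negbTE nmj); apply: hhi; lia.
  rewrite hQ mulr0 add0r; apply: IHj.
  - by rewrite size_set_lt.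
  - move=> m hm; rewrite nth_set_nth /=; case: eqP => [_|ne]; first by apply: inF_S.
    by apply: hall; move: hm; rewrite size_set_lt.
  - move=> m hm; rewrite nth_set_nth /=; case: eqP => [_|ne]; first exact: hw.
    by apply: hhi; lia.
move=> X hX hall; apply: (P q) => // m; lia.
Qed.

Fixpoint roots k : seq F :=
  if k is k'.+1 then [seq r + lam k' | r <- roots k'] ++ roots k' else [:: 0].

Theorem spectral k : forall q f, is_qform q f -> forall X, size X = q -> allF k X ->
  opM phi (roots k) f X = 0.
Proof.
elim: k => [|k IH] q f hf X hs hX.
  rewrite /= /addf /sclf oppr0 mul0r addr0 /Mop big1 // => l _.
  apply: (f_nth0 hf (i := l)); rewrite ?size_upd -?hs //.
  by rewrite nth_upd eqxx (hX l (ltn_ord l)) phi0'.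
rewrite /= /opM foldr_cat -/(opM phi (roots k) f) -/(opM phi _ (opM phi (roots k) f)).
set f' := opM phi (roots k) f.
have hf' : is_qform q f' by apply: qform_opM.
have h0' : forall Y, size Y = q -> allF k Y -> f' Y = 0 by move=> Y; apply: IH.
have hv := vanish_opM [seq r + lam k | r <- roots k] h0'.
case: q hf hs hf' h0' hv => [|q'] hf hs hf' h0' hv.
  apply: hv => //; by case: X hs hX => // _ _ m.
apply: (expand (qform_opM lin_phi _ hf') hv) => //.
move=> Y hY hYa.
rewrite -/(iot (b k) (opM phi [seq r + lam k | r <- roots k] f') Y).
rewrite (iot_opM _ hf' h0') //.
apply: (IH q') => //; exact: qform_iot.
Qed.

End Spectral.
Section Avoid.
Variables (F : numFieldType) (n : nat).
Local Notation V := 'rV[F]_n.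

Lemma avoid_list (l : seq F) : exists s : F, s \notin l.
Proof.
pose S := [seq i%:R | i <- iota 0 (size l).+1] : seq F.
have uS : uniq S.
  rewrite map_inj_uniq ?iota_uniq // => i j /eqP; rewrite Num.Theory.eqr_nat => /eqP.
  done.
case: (boolP (all (mem l) S)) => [hall|].
  have := uniq_leq_size uS (fun y hy => (allP hall) y hy).
  by rewrite size_map size_iota ltnn.
by case/allPn => s _ hs; exists s.
Qed.

Lemma ev_addv (a : 'cV[F]_n) (u w : V) : ev a (u + w) = ev a u + ev a w.
Proof. by rewrite /ev mulmxDl mxE. Qed.
Lemma ev_scalev (a : 'cV[F]_n) c (u : V) : ev a (c *: u) = c * ev a u.
Proof. by rewrite /ev -scalemxAl mxE. Qed.
Lemma ev_addf (a1 a2 : 'cV[F]_n) (u : V) : ev (a1 + a2) u = ev a1 u + ev a2 u.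
Proof. by rewrite /ev mulmxDr mxE. Qed.
Lemma ev_scalef (a : 'cV[F]_n) c (u : V) : ev (c *: a) u = c * ev a u.
Proof. by rewrite /ev -scalemxAr mxE. Qed.
Lemma ev_sumf (I : finType) (P : pred I) (a : I -> 'cV[F]_n) (u : V) :
  ev (\sum_(i | P i) a i) u = \sum_(i | P i) ev (a i) u.
Proof. by rewrite /ev mulmx_sumr summxE. Qed.
Lemma ev0f (u : V) : ev 0 u = 0.
Proof. by rewrite /ev mulmx0 mxE. Qed.

Lemma avoid_forms (cs : seq 'cV[F]_n) : (forall c, c \in cs -> c != 0) ->
  exists x : V, forall c, c \in cs -> ev c x != 0.
Proof.
elim: cs => [|c cs IH] hcs; first by exists 0.
have [x hx] : exists x : V, forall c', c' \in cs -> ev c' x != 0.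
  by apply: IH => c' h; apply: hcs; rewrite inE h orbT.
have c0 : c != 0 by apply: hcs; rewrite inE eqxx.
have [i hi] : exists i, c i 0 != 0.
  case: (pickP (fun i => c i 0 != 0)) => [i h|h]; first by exists i.
  case/negP: c0; apply/eqP/matrixP => i j; rewrite (ord1 j) mxE.
  by move: (h i) => /negbFE/eqP.
pose y : V := delta_mx 0 i.
have hy : ev c y = c i 0 by rewrite /ev /y -rowE mxE.
have [s hs] := avoid_list [seq - ev c' x / ev c' y | c' <- c :: cs].
exists (x + s *: y) => c'; rewrite inE ev_addv ev_scalev => hc'.
apply/negP => /eqP e.
have ey : ev c' y != 0.
  case/orP: hc' => [/eqP ->|hc']; first by rewrite hy.
  apply/negP => /eqP e'; rewrite e' mulr0 addr0 in e.
  by move: (hx c' hc'); rewrite e eqxx.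
case/negP: hs; apply/mapP; exists c'; first by rewrite inE.
have e2 : s * ev c' y = - ev c' x by apply/eqP; rewrite -addr_eq0 addrC e.
by rewrite -e2 mulfK.
Qed.

End Avoid.
Section Chain.
Variables (F : numFieldType) (n : nat).
Local Notation V := 'rV[F]_n.
Variables (br : V -> V -> V) (m : nat) (v : 'I_m -> V) (alpha : 'I_m -> 'cV[F]_n).
Variables (th : 'cV[F]_n) (x : V).
Hypothesis hbr : is_lie_bracket br.
Hypothesis hflag : lie_flag br v alpha.
Hypothesis hth : closed_form br th.
Hypothesis hx : forall S : {set 'I_m}, ev (th + \sum_(i in S) alpha i) x != 0.

Definition bch (j : nat) : V :=
  if (insub j : option 'I_m) is Some i then v i else \row_(l < n) (((j - m)%N == l)%:R).
Definition lch (j : nat) : F :=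
  if (insub j : option 'I_m) is Some i then ev (alpha i) x else 0.

Lemma bch_lt (i : 'I_m) : bch i = v i.
Proof. by rewrite /bch valK. Qed.
Lemma lch_lt (i : 'I_m) : lch i = ev (alpha i) x.
Proof. by rewrite /lch valK. Qed.
Lemma bch_ge j : (m <= j)%N -> bch j = \row_(l < n) (((j - m)%N == l)%:R).
Proof. by move=> h; rewrite /bch insubF //; apply/negbTE; rewrite -leqNgt. Qed.
Lemma lch_ge j : (m <= j)%N -> lch j = 0.
Proof. by move=> h; rewrite /lch insubF //; apply/negbTE; rewrite -leqNgt. Qed.

Lemma submx_inF k p (A : 'M[F]_(p, n)) (y : V) : (y <= A)%MS ->
  (forall i, inF bch k (row i A)) -> inF bch k y.
Proof.
move=> /submxP [u ->] hA; rewrite mulmx_sum_row.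
apply: (big_ind (inF bch k)); [exact: inF0 | exact: inF_add | ].
by move=> i _; apply: inF_scale.
Qed.

Lemma v_inF (i : 'I_m) k : (i < k)%N -> inF bch k (v i).
Proof. by move=> h; rewrite -bch_lt; apply: (inF_le h); apply: inF_b. Qed.

Lemma br0l w : br 0 w = 0.
Proof.
have := brDl hbr 0 0 w; rewrite addr0 => h.
by apply: (addrI (br 0 w)); rewrite addr0 -h.
Qed.

Lemma br_in_comm u w : (br u w <= commutator_sub br)%MS.
Proof.
set S := commutator_sub br.
have base i j : (br (row i 1%:M) (row j 1%:M) <= S)%MS.
  rewrite /S /commutator_sub /derived.
  apply: (sumsmx_sup i) => //; apply: (sumsmx_sup j) => //.
  by rewrite genmxE.
have step1 j u' : (br u' (row j 1%:M) <= S)%MS.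
  rewrite -(mulmx1 u') mulmx_sum_row.
  apply: (big_ind (fun z => br z (row j 1%:M) <= S)%MS).
  - by rewrite br0l sub0mx.
  - by move=> a b' ha hb'; rewrite (brDl hbr) addmx_sub.
  - move=> i _; have := brL hbr (u' 0 i) (row i 1%:M) 0 (row j 1%:M).
    by rewrite addr0 br0l addr0 => ->; apply: scalemx_sub.
rewrite -(mulmx1 w) mulmx_sum_row.
apply: (big_ind (fun z => br u z <= S)%MS).
- by rewrite (br0r hbr) sub0mx.
- by move=> a b' ha hb'; rewrite (brDr hbr) addmx_sub.
- move=> j _; have := brR hbr (w 0 j) (row j 1%:M) 0 u.
  by rewrite addr0 (br0r hbr) addr0 => ->; apply: scalemx_sub.
Qed.

Lemma comm_inF u w : inF bch m (br u w).
Proof.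
case: hflag => _ /andP [_ h] _.
apply: (submx_inF (A := flagmx v)); first exact: submx_trans (br_in_comm u w) h.
by move=> i; rewrite rowK; apply: v_inF.
Qed.

Lemma hb_chain k : inF bch k (br x (bch k) - lch k *: bch k).
Proof.
case: (ltnP k m) => hk.
  have := bch_lt (Ordinal hk); have := lch_lt (Ordinal hk); rewrite /= => -> ->.
  case: hflag => _ _ /(_ (Ordinal hk) x) h.
  apply: (submx_inF h) => j; rewrite rowK; case: ifP => hj; first exact: v_inF.
  exact: inF0.
rewrite lch_ge // scale0r subr0; apply: (inF_le hk); exact: comm_inF.
Qed.

Lemma all_inF (y : V) : inF bch (m + n) y.
Proof.
rewrite -(mulmx1 y) mulmx_sum_row.
apply: (big_ind (inF bch (m + n))); [exact: inF0 | exact: inF_add | ].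
move=> l _; apply: inF_scale.
have -> : row l 1%:M = bch (m + l).
  rewrite bch_ge ?leq_addr //; apply/rowP => l'; rewrite !mxE addKn.
  by [].
apply: (inF_le (k := (m + l).+1)); last exact: inF_b.
by rewrite -addnS leq_add2l.
Qed.

Lemma roots_sum k r : r \in roots lch k ->
  exists T : {set 'I_m}, (forall i, i \in T -> (i < k)%N) /\ r = \sum_(i in T) ev (alpha i) x.
Proof.
elim: k r => [|k IH] r /=.
  by rewrite inE => /eqP ->; exists set0; split => [i|]; rewrite ?inE // big_set0.
rewrite mem_cat => /orP [/mapP [r' hr' ->]|hr].
  have [T [hT ->]] := IH r' hr'.
  case: (ltnP k m) => hk.
    exists (Ordinal hk |: T); split.
      by move=> i; rewrite !inE => /orP [/eqP ->//|/hT h]; apply: ltnW.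
    have nT : Ordinal hk \notin T by apply/negP => /hT; rewrite ltnn.
    rewrite big_setU1 //= addrC.
    by have := lch_lt (Ordinal hk); rewrite /= => ->.
  exists T; split; last by rewrite lch_ge // addr0.
  by move=> i /hT h; apply: ltnW.
have [T [hT ->]] := IH r hr; exists T; split => // i /hT h; exact: ltnW.
Qed.

Lemma prod_roots_neq0 :
  \prod_(r <- roots lch (m + n)) - (ev th x + r) != 0.
Proof.
have : forall r, r \in roots lch (m + n) -> - (ev th x + r) != 0.
  move=> r /roots_sum [T [_ ->]]; rewrite oppr_eq0 -ev_sumf -ev_addf; exact: hx.
elim: (roots lch (m + n)) => [|r s IH] h; first by rewrite big_nil oner_eq0.
rewrite big_cons mulf_neq0 //; first by apply: h; rewrite inE eqxx.
by apply: IH => r' hr'; apply: h; rewrite inE hr' orbT.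
Qed.

Theorem vanishing q f : is_qform q f -> cocycle br th q f -> coboundary br th q f.
Proof.
case: q => [|q'] hf hcf.
  move=> X /size0nil ->.
  have := hcf [:: x] erefl; rewrite /dtw /= big_ord1 big_ord0 add0r big_ord1 /=.
  rewrite expr0 mul1r => /eqP; rewrite mulf_eq0 => /orP [h|/eqP //].
  by move: (hx set0); rewrite big_set0 addr0 h.
apply: (cob_of_opM (x := x) (s := roots lch (m + n)) hbr hth hf hcf).
  exact: prod_roots_neq0.
move=> X hX; apply: (spectral (phi_lin x hbr) hb_chain hf hX).
by move=> l _; apply: all_inF.
Qed.

End Chain.
Unset Implicit Arguments.

Theorem mainTheorem4 (R : realType) (n : nat)
    (br : 'rV[R[i]]_n -> 'rV[R[i]]_n -> 'rV[R[i]]_n)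
    (m : nat) (v : 'I_m -> 'rV[R[i]]_n) (alpha : 'I_m -> 'cV[R[i]]_n) :
  is_lie_bracket br -> solvable_lie br -> lie_flag br v alpha ->
  exists Ot : 'cV[R[i]]_n -> Prop,
    (forall a, Ot a -> in_Omega alpha a) /\
    (forall (omega : 'cV[R[i]]_n) (lam : R[i]), closed_form br omega ->
       (twisted_cohom_nontrivial br (lam *: omega) <->
        (- (lam *: omega) = 0 \/ Ot (- (lam *: omega))))).
Proof.
move=> hbr _ hflag.
exists (fun a => in_Omega alpha a /\ twisted_cohom_nontrivial br (- a)).
split; first by move=> a [].
move=> omega lam hom.
set th := lam *: omega.
have hth : closed_form br th by move=> u w; rewrite /th ev_scalef hom mulr0.
split.
- move=> hnt.
  case: (eqVneq th 0) => [e|ne]; first by left; rewrite e oppr0.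
  right; split; last by rewrite opprK.
  case: (classic (in_Omega alpha (- th))) => // hno; exfalso.
  have hS : forall S : {set 'I_m}, th + \sum_(i in S) alpha i != 0.
    move=> S; apply/negP => /eqP e.
    case: (eqVneq S set0) => [e0|nS].
      by rewrite e0 big_set0 addr0 in e; rewrite e eqxx in ne.
    apply: hno; exists S; split => //.
    by apply: (addrI th); rewrite subrr e.
  have hcs : forall c, c \in [seq th + \sum_(i in T) alpha i | T : {set 'I_m} <- enum {: {set 'I_m}}] -> c != 0.
    by move=> c /mapP [T _ ->]; apply: hS.
  have [x hx] := avoid_forms hcs.
  have hx' : forall S : {set 'I_m}, ev (th + \sum_(i in S) alpha i) x != 0.
    by move=> S; apply: hx; apply/mapP; exists S; rewrite ?mem_enum.
  case: hnt => q [f [hf hcf hnc]]; apply: hnc.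
  exact: (vanishing hbr hflag hth hx' hf hcf).
- case => [e | [_ h]]; last by rewrite opprK in h.
  have -> : th = 0 by apply/eqP; rewrite -oppr_eq0 e.
  exists 0%N, (fun _ => 1); split.
  + split => [X i c u w _ hi | X i j _ hij]; first by rewrite ltn0 in hi.
    by case/andP: hij => _; rewrite ltn0.
  + move=> X hX; rewrite /dtw hX big_ord1 big_ord0 add0r big_ord1 ev0f.
    by rewrite mulr0 mul0r.
  + by move=> /(_ [::] erefl) /eqP; rewrite oner_eq0.
Qed.
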